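(* Let $c>0$, $n=2^k$ with $ck$ an integer, and let $G$ be a graph on vertex set $\{0,1\}^k$ with property P: for every $U\subseteq V(G)$ with $|U|\le\tfrac13k$ and every pattern $p$ with $|p|\le\tfrac13k$, some vertex of $N(U)$ is consistent with $p$. Then in the Prover–Adversary game on $\mathrm{Clique}(G)$ the Adversary has a strategy that wins against any Prover who uses at most $\tfrac19k^2$ memory locations.
   Context: A pattern is $p\in\{*,0,1\}^k$; $p$ is consistent with vertex $v=v_1\cdots v_k$ if $p_i\in\{v_i,*\}$ for all $i$; $|p|$ is the number of non-$*$ positions. $N(U)=\bigcap_{v\in U}\{u:\{u,v\}\in E(G)\}$. $\mathrm{Clique}(G)$ is the CNF with variables $x^i_b$ ($i\in[ck]$, $b\in[k]$), writing $(x^i_b\ne v_b)$ for $\neg x^i_b$ if $v_b=1$ and $x^i_b$ if $v_b=0$, with clauses: for each vertex $v$ and distinct $i,j\in[ck]$, $\bigvee_b(x^i_b\ne v_b)\lor\bigvee_b(x^j_b\ne v_b)$; and for each pair of distinct vertices $u,v$ with $\{u,v\}\notin E(G)$ and distinct $i,j$, $\bigvee_b(x^i_b\ne u_b)\lor\bigvee_b(x^j_b\ne v_b)$. It is satisfiable iff $G$ has a clique of size $ck$. The Prover–Adversary game on a CNF $\phi$: the Prover holds a partial assignment in memory (each assigned variable occupies one memory location), initially empty. In each round the Prover either queries a variable, whose value the Adversary supplies and the Prover stores, or deletes a stored value (a deleted variable may later be queried again and answered differently). The Prover wins when the stored partial assignment falsifies some clause of $\phi$; the Adversary wins if the game continues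 forever. A Prover using at most $M$ memory locations never stores more than $M$ values simultaneously. *)

(* Defs.v *)
From mathcomp Require Import all_boot all_order all_algebra.
Set Implicit Arguments. Unset Strict Implicit. Unset Printing Implicit Defensive.

Definition vertex (k : nat) := {ffun 'I_k -> bool}.

(* Patterns in {*,0,1}^k: None = *, Some b = b. *)
Definition pattern (k : nat) := {ffun 'I_k -> option bool}.

Definition consistent k (p : pattern k) (v : vertex k) : bool :=
  [forall i, if p i is Some b then v i == b else true].

Definition psize k (p : pattern k) : nat := #|[set i | p i != None]|.

Definition commonN k (e : rel (vertex k)) (U : {set vertex k}) : {set vertex k} :=
  [set u | [forall v in U, e u v]].

(* Property P (sizes <= k/3 written as 3 * size <= k). *)
Definition propP k (e : rel (vertex k)) : Prop :=
  forall U : {set vertex k}, 3 * #|U| <= k ->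
  forall p : pattern k, 3 * psize p <= k ->
  exists u, u \in commonN e U /\ consistent p u.

(* Variables x^i_b, i in [m] (m = ck), b in [k]. *)
Definition var (m k : nat) := ('I_m * 'I_k)%type.

(* A literal (x, pol) is satisfied iff x takes value pol. *)
Definition lit (m k : nat) := (var m k * bool)%type.
Definition clause (m k : nat) := seq (lit m k).

(* \/_b (x^i_b != v_b): the literal (x^i_b != v_b) is ~x if v_b = 1, x if v_b = 0,
   i.e. the literal with polarity ~~ v_b. *)
Definition block_clause m k (i : 'I_m) (v : vertex k) : clause m k :=
  [seq ((i, b), ~~ v b) | b <- enum 'I_k].

Definition clique_clause m k (e : rel (vertex k)) (C : clause m k) : Prop :=
  (exists (v : vertex k) (i j : 'I_m), i != j /\
      C = block_clause i v ++ block_clause j v) \/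
  (exists (u v : vertex k) (i j : 'I_m), u != v /\ ~~ e u v /\ i != j /\
      C = block_clause i u ++ block_clause j v).

(* Partial assignments (Prover's memory). *)
Definition passign (m k : nat) := {ffun var m k -> option bool}.

Definition empty_passign m k : passign m k := [ffun _ => None].

Definition memsize m k (rho : passign m k) : nat := #|[set x | rho x != None]|.

Definition falsifies m k (rho : passign m k) (C : clause m k) : bool :=
  all (fun l : lit m k => rho l.1 == Some (~~ l.2)) C.

Definition falsifies_clique m k (e : rel (vertex k)) (rho : passign m k) : Prop :=
  exists C : clause m k, clique_clause e C /\ falsifies rho C.

Inductive action (m k : nat) : Type :=
  | AQuery of var m k
  | ADelete of var m k.

Inductive move (m k : nat) : Type :=
  | Query of var m k & bool  (* queried variable and the Adversary's answer *)
  | Delete of var m k.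

Definition apply_move m k (rho : passign m k) (mv : move m k) : passign m k :=
  match mv with
  | Query x b => [ffun y => if y == x then Some b else rho y]
  | Delete x => [ffun y => if y == x then None else rho y]
  end.

Definition state m k (h : seq (move m k)) : passign m k :=
  foldl (@apply_move m k) (empty_passign m k) h.

Definition prover_strategy (m k : nat) := seq (move m k) -> action m k.
Definition adversary_strategy (m k : nat) := seq (move m k) -> var m k -> bool.

Fixpoint play m k (P : prover_strategy m k) (A : adversary_strategy m k) (n : nat)
  : seq (move m k) :=
  match n with
  | 0 => [::]
  | n'.+1 =>
      let h := play P A n' in
      rcons h (match P h with
               | AQuery x => Query x (A h x)
               | ADelete x => Delete x
               end)
  end.

Definition adversary_wins_mem m k (e : rel (vertex k)) (A : adversary_strategy m k)
  (memOK : nat -> Prop) : Prop :=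
  forall (P : prover_strategy m k) (n : nat),
    (forall j, j <= n -> memOK (memsize (state (play P A j)))) ->
    ~ falsifies_clique e (state (play P A n)).

(* Main.v *)
Require Import Defs.
From mathcomp Require Import all_boot all_order all_algebra.
From mathcomp Require Import zify.
Import GRing.Theory Num.Theory.

Set Implicit Arguments. Unset Strict Implicit. Unset Printing Implicit Defensive.

Definition cnt m k (rho : passign m k) (i : 'I_m) : nat :=
  #|[set b : 'I_k | rho (i, b) != None]|.
Definition heavy m k (rho : passign m k) (i : 'I_m) : bool := (k < 3 * cnt rho i)%N.

Definition upd m k (f : 'I_m -> vertex k) (i : 'I_m) (u : vertex k) : 'I_m -> vertex k :=
  fun j => if j == i then u else f j.

Definition newf m k (e : rel (vertex k)) (f : 'I_m -> vertex k) (rho : passign m k)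
  (x : var m k) : 'I_m -> vertex k :=
  let rho1 := apply_move rho (Query x true) in
  if heavy rho1 x.1 && ~~ heavy rho x.1 then
    let U := [set f j | j in [set j | heavy rho1 j && (j != x.1)]] in
    let p : pattern k := [ffun b => rho (x.1, b)] in
    match [pick u | (u \in commonN e U) && consistent p u] with
    | Some u => upd f x.1 u | None => f end
  else f.

Definition stepS m k (e : rel (vertex k)) (s : ('I_m -> vertex k) * passign m k)
  (mv : move m k) : ('I_m -> vertex k) * passign m k :=
  match mv with
  | Query x _ => (newf e s.1 s.2 x, apply_move s.2 mv)
  | Delete x => (s.1, apply_move s.2 mv)
  end.

Definition f0 m k : 'I_m -> vertex k := fun _ => [ffun _ => false].

Definition SS m k (e : rel (vertex k)) (h : seq (move m k)) :=
  foldl (stepS e) (@f0 m k, empty_passign m k) h.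

Definition Adv m k (e : rel (vertex k)) : adversary_strategy m k :=
  fun h x => newf e (SS e h).1 (SS e h).2 x x.1 x.2.

Lemma SS2 m k (e : rel (vertex k)) (h : seq (move m k)) : (SS e h).2 = state h.
Proof.
rewrite /SS /state.
suff: forall s, (foldl (stepS e) s h).2 = foldl (@apply_move m k) s.2 h by apply.
elim: h => [|mv h IH] s //=; rewrite IH; by case: mv.
Qed.

Definition Inv m k (e : rel (vertex k)) (f : 'I_m -> vertex k) (rho : passign m k) :=
  (forall i b g, rho (i, b) = Some g -> f i b = g) /\
  (forall i j, i != j -> heavy rho i -> heavy rho j -> e (f i) (f j)).

Lemma card_setP (T : finType) (P : pred T) : #|[set x | P x]| = \sum_x (P x : nat).
Proof.
rewrite -sum1_card big_mkcond; apply: eq_bigr => x _; rewrite inE; by case: (P x).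
Qed.

Lemma heavy_bound m k (rho : passign m k) :
  (9 * memsize rho <= k ^ 2)%N -> (3 * #|[set j | heavy rho j]| <= k)%N.
Proof.
move=> Hm.
set H := [set j | heavy rho j].
have Hsum : (\sum_i cnt rho i = memsize rho)%N.
  rewrite /memsize card_setP /cnt.
  under eq_bigr => i _ do rewrite card_setP.
  rewrite pair_big /=. by apply: eq_bigr => [[i b]] _.
have H1 : (k.+1 * #|H| <= 3 * \sum_(i in H) cnt rho i)%N.
  rewrite mulnC -sum_nat_const big_distrr /=.
  apply: leq_sum => i; rewrite inE => Hi. exact: Hi.
have H2 : (\sum_(i in H) cnt rho i <= \sum_i cnt rho i)%N.
  rewrite [X in (_ <= X)%N](bigID (fun i => i \in H)) /=. exact: leq_addr.
rewrite Hsum in H2.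
nia.
Qed.

Lemma cnt_query m k (rho : passign m k) x b j :
  cnt (apply_move rho (Query x b)) j = cnt (apply_move rho (Query x true)) j.
Proof. apply: eq_card => b'; rewrite !inE !ffunE; by case: ifP. Qed.

Lemma heavy_query m k (rho : passign m k) x b j :
  heavy (apply_move rho (Query x b)) j = heavy (apply_move rho (Query x true)) j.
Proof. by rewrite /heavy cnt_query. Qed.

Lemma cnt_query_other m k (rho : passign m k) x b j :
  j != x.1 -> cnt (apply_move rho (Query x b)) j = cnt rho j.
Proof.
move=> Hj; apply: eq_card => b'; rewrite !inE !ffunE.
case: x Hj => i0 b0 /= Hj. by rewrite xpair_eqE (negbTE Hj).
Qed.

Lemma heavy_query_other m k (rho : passign m k) x b j :
  j != x.1 -> heavy (apply_move rho (Query x b)) j = heavy rho j.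
Proof. by move=> Hj; rewrite /heavy cnt_query_other. Qed.

Lemma newf_spec m k (e : rel (vertex k)) (esym : symmetric e) (HP : propP e)
  f (rho : passign m k) x b :
  (9 * memsize (apply_move rho (Query x b)) <= k ^ 2)%N -> Inv e f rho ->
  let f' := newf e f rho x in
  [/\ (forall j, j != x.1 -> f' j = f j),
      (forall b g, rho (x.1, b) = Some g -> f' x.1 b = g) &
      (forall j, j != x.1 -> heavy (apply_move rho (Query x true)) x.1 ->
         heavy (apply_move rho (Query x true)) j -> e (f' x.1) (f j))].
Proof.
move=> Hm [Hc Ha] f'.
set rho1 := apply_move rho (Query x true).
have Hb := heavy_bound Hm.
rewrite /f' /newf -/rho1.
case: ifP => Hbec; last first.
  split => //.
  - by move=> b' g; apply: Hc.
  move=> j Hj H1 H2; apply: Ha; first by rewrite eq_sym.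
  + apply/negPn/negP => Hn; move: Hbec; by rewrite H1 Hn.
  + by rewrite -(@heavy_query_other _ _ rho x b j Hj) heavy_query.
set U := [set f j | j in [set j | heavy rho1 j && (j != x.1)]].
set p : pattern k := [ffun b => rho (x.1, b)].
case: pickP => [u /andP[Hu Hcu] | Hn]; last first.
  exfalso.
  have HU : (3 * #|U| <= k)%N.
    apply: leq_trans Hb. rewrite leq_mul2l /=.
    apply: leq_trans (leq_imset_card _ _) _.
    apply: subset_leq_card; apply/subsetP => j; rewrite !inE => /andP[Hj _].
    have := @heavy_query _ _ rho x b j; rewrite Hj => Hq; exact: Hq.
  have Hp : (3 * psize p <= k)%N.
    move: Hbec => /andP[_]; rewrite /heavy -leqNgt.
    suff -> : psize p = cnt rho x.1 by [].
    by apply: eq_card => b'; rewrite !inE ffunE.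
  have [u [Hu Hcu]] := HP U HU p Hp.
  by move: (Hn u); rewrite Hu Hcu.
have Hux : upd f x.1 u x.1 = u by rewrite /upd eqxx.
split.
- by move=> j Hj; rewrite /upd (negbTE Hj).
- move=> b' g Hg; rewrite Hux.
  move/forallP: Hcu => /(_ b'); rewrite ffunE Hg. by move/eqP.
- move=> j Hj _ Hj1; rewrite Hux.
  move: Hu; rewrite inE => /forallP /(_ (f j)) /implyP; apply.
  apply: imset_f; by rewrite inE Hj1 Hj.
Qed.

Lemma inv_query m k (e : rel (vertex k)) (esym : symmetric e) (HP : propP e)
  f (rho : passign m k) x :
  let b := newf e f rho x x.1 x.2 in
  (9 * memsize (apply_move rho (Query x b)) <= k ^ 2)%N -> Inv e f rho ->
  Inv e (newf e f rho x) (apply_move rho (Query x b)).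
Proof.
move=> b Hm HI.
have [Hother Hcons Hadj] := newf_spec esym HP Hm HI.
case: HI => Hc Ha.
have Eb : b = newf e f rho x x.1 x.2 by [].
clearbody b.
split.
- move=> j b' g; rewrite ffunE; case: ifP => [/eqP Hx [<-] | Hx Hg].
    rewrite Eb -Hx; reflexivity.
  have [E|Hj] := eqVneq j x.1; first by rewrite E in Hg *; exact: Hcons.
  rewrite Hother //; exact: Hc.
- move=> j1 j2 Hne; rewrite !(@heavy_query _ _ rho x b) => H1 H2.
  have [E1|N1] := eqVneq j1 x.1.
    subst j1; rewrite (Hother j2); last by rewrite eq_sym.
    apply: Hadj => //; by rewrite eq_sym.
  have [E2|N2] := eqVneq j2 x.1.
    subst j2; rewrite (Hother j1) // esym; exact: Hadj.
  rewrite !Hother //; apply: Ha => //.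
  + by rewrite -(@heavy_query_other _ _ rho x true j1 N1).
  + by rewrite -(@heavy_query_other _ _ rho x true j2 N2).
Qed.

Lemma inv_delete m k (e : rel (vertex k)) f (rho : passign m k) x :
  Inv e f rho -> Inv e f (apply_move rho (Delete x)).
Proof.
case=> Hc Ha; split.
- move=> j b' g; rewrite ffunE; case: ifP => // _; exact: Hc.
- have Hh : forall j, heavy (apply_move rho (Delete x)) j -> heavy rho j.
    move=> j; rewrite /heavy => H; apply: leq_trans H _; rewrite leq_mul2l /=.
    apply: subset_leq_card; apply/subsetP => b'; rewrite !inE ffunE.
    by case: ifP.
  move=> i j Hij Hi Hj; apply: Ha => //; exact: Hh.
Qed.

Lemma inv_nofalse m k (e : rel (vertex k)) f (rho : passign m k) i j u v :
  (0 < k)%N -> i != j -> Inv e f rho ->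
  falsifies rho (block_clause i u ++ block_clause j v) -> e u v.
Proof.
move=> Hk Hij [Hc Ha]; rewrite /falsifies all_cat => /andP[Hi Hj].
have full : forall (l : 'I_m) (w : vertex k), all (fun l0 : lit m k => rho l0.1 == Some (~~ l0.2)) (block_clause l w) ->
   heavy rho l /\ f l = w.
  move=> l w /allP Hl.
  have Hb : forall b, rho (l, b) = Some (w b).
    move=> b; have := Hl ((l, b), ~~ w b).
    rewrite /block_clause map_f ?mem_enum // negbK => /(_ isT) /eqP //.
  split.
    rewrite /heavy /cnt.
    have -> : [set b | rho (l, b) != None] = setT.
      by apply/setP => b; rewrite !inE Hb.
    rewrite cardsT card_ord. lia.
  apply/ffunP => b; exact: Hc (Hb b).
have [Hhi <-] := full _ _ Hi.
have [Hhj <-] := full _ _ Hj.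
exact: Ha.
Qed.

Lemma inv_play m k (e : rel (vertex k)) (esym : symmetric e) (HP : propP e)
  (P : prover_strategy m k) n :
  (forall j, (j <= n)%N -> (9 * memsize (state (play P (Adv e) j)) <= k ^ 2)%N) ->
  Inv e (SS e (play P (Adv e) n)).1 (state (play P (Adv e) n)).
Proof.
elim: n => [|n IH] Hmem.
  split => /=.
  - by move=> i b g; rewrite /state /= ffunE.
  - move=> i j _; rewrite /heavy /cnt.
    have -> : [set b : 'I_k | empty_passign m k (i, b) != None] = set0.
      by apply/setP => b; rewrite !inE ffunE.
    by rewrite cards0.
have IH' := IH (fun j Hj => Hmem j (leqW Hj)).
have Hn := Hmem n.+1 (leqnn _).
move: Hn; rewrite /= /SS /state !foldl_rcons -/(SS e _) -/(state _).
case: (P (play P (Adv e) n)) => x Hn /=.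
- rewrite SS2 in Hn *.
  rewrite /Adv SS2 in Hn *.
  exact: inv_query.
- exact: inv_delete.
Qed.

Theorem mainTheorem6 (k m : nat) (c : rat)
  (hc : (0 < c)%R) (hm : (c * k%:R)%R = (m%:R)%R)
  (e : rel (vertex k)) (esym : symmetric e) (eirr : irreflexive e)
  (HP : propP e) :
  exists A : adversary_strategy m k,
    adversary_wins_mem e A (fun s => (9 * s <= k ^ 2)%N).
Proof.
exists (Adv e) => P n Hmem.
have HI := inv_play esym HP Hmem.
move: HI; set f := (SS e _).1; set rho := state _ => HI.
have Hk0 : (0 < m)%N -> (0 < k)%N.
  move=> Hm; rewrite lt0n; apply/negP => /eqP Ek.
  have Ek' : (k%:R : rat) = 0%R by rewrite Ek.
  move: hm; rewrite Ek' GRing.mulr0 => /eqP; rewrite eq_sym pnatr_eq0 => /eqP Em.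
  by rewrite Em in Hm.
case=> C [[[v [i [j [Hij ->]]]] | [u [v [i [j [Huv [Hne [Hij ->]]]]]]]] Hf].
all: have Hk := Hk0 (leq_ltn_trans (leq0n _) (ltn_ord i)).
- by have := inv_nofalse Hk Hij HI Hf; rewrite eirr.
- by have := inv_nofalse Hk Hij HI Hf; rewrite (negbTE Hne).
Qed.
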